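(* $17\notin\operatorname{Spec}(32_{65})$.
   Context: $32_{65}$ is the finite integral symmetric relation algebra with atoms $1'$, $a$, $b$, $c$, all symmetric, in which a diversity cycle $xyz$ (with $x,y,z\in\{a,b,c\}$) is mandatory (i.e. $x;y\ge z$) if it involves $a$ and forbidden (i.e. $x;y\cdot z=0$) otherwise. A representation over a set $U$ is an embedding into the full relation algebra on $U\times U$. $\operatorname{Spec}(A)$ is the set of cardinals $\alpha\le\omega$ such that $A$ has a representation over a set of cardinality $\alpha$. *)

(* Defs.v *)
From HB Require Import structures.
From mathcomp Require Import all_boot.
Set Implicit Arguments. Unset Strict Implicit. Unset Printing Implicit Defensive.

Inductive atom := one | at_a | at_b | at_c.

Definition atom_code (x : atom) : 'I_4 :=
  match x with one => inord 0 | at_a => inord 1 | at_b => inord 2 | at_c => inord 3 end.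
Definition atom_decode (i : 'I_4) : atom :=
  match val i with 0 => one | 1 => at_a | 2 => at_b | _ => at_c end.
Lemma atom_codeK : cancel atom_code atom_decode.
Proof. by case; rewrite /atom_decode /= inordK. Qed.
HB.instance Definition _ := Equality.copy atom (can_type atom_codeK).
HB.instance Definition _ := Finite.copy atom (can_type atom_codeK).

(* Allowed (consistent) cycles: cyc x y z holds iff x;y >= z for atoms. *)
Definition cyc (x y z : atom) : bool :=
  if x == one then y == z
  else if y == one then x == z
  else if z == one then x == y     (* all atoms are symmetric: x;x^ = x;x >= 1' *)
  else [|| x == at_a, y == at_a | z == at_a].

(* Elements of 32_65 are sets of atoms (it is the complex algebra of its atom structure). *)
Definition RA := {set atom}.
Definition ra_join (X Y : RA) : RA := X :|: Y.
Definition ra_compl (X : RA) : RA := ~: X.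
Definition ra_id : RA := [set one].
Definition ra_conv (X : RA) : RA := X. (* all atoms symmetric *)
Definition ra_comp (X Y : RA) : RA :=
  [set z | [exists x in X, exists y in Y, cyc x y z]].

Definition representation (U : finType) (h : RA -> U -> U -> bool) : Prop :=
  injective h /\
  (forall X Y u v, h (ra_join X Y) u v = h X u v || h Y u v) /\
  (forall X u v, h (ra_compl X) u v = ~~ h X u v) /\
  (forall u v, h ra_id u v = (u == v)) /\
  (forall X u v, h (ra_conv X) u v = h X v u) /\
  (forall X Y u v, h (ra_comp X Y) u v = [exists w, h X u w && h Y w v]).

Definition in_Spec (n : nat) : Prop :=
  exists (U : finType) (h : RA -> U -> U -> bool), #|U| = n /\ representation h.

(* Main.v *)
Require Import Defs.
From mathcomp Require Import all_boot zify.
Set Implicit Arguments. Unset Strict Implicit. Unset Printing Implicit Defensive.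

Lemma neq_atoms : ((Defs.one == at_a) = false) * ((Defs.one == at_b) = false) * ((Defs.one == at_c) = false) *
 ((at_a == Defs.one) = false) * ((at_b == Defs.one) = false) * ((at_c == Defs.one) = false) *
 ((at_a == at_b) = false) * ((at_a == at_c) = false) * ((at_b == at_a) = false) *
 ((at_b == at_c) = false) * ((at_c == at_a) = false) * ((at_c == at_b) = false).
Proof. by do !split; apply/eqP. Qed.


Lemma L_T (U : finType) (h : RA -> U -> U -> bool) (Hr : representation h) (u v : U) :
  h setT u v = true.
Proof.
case: Hr => _ [hJ [hC _]].
have := hJ set0 (ra_compl set0) u v; rewrite hC /ra_join /ra_compl setUCr orbN; done.
Qed.

Lemma L_0 (U : finType) (h : RA -> U -> U -> bool) (Hr : representation h) (u v : U) :
  h set0 u v = false.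
Proof.
have := L_T Hr u v; case: Hr => _ [hJ [hC _]].
by have := hC setT u v; rewrite /ra_compl setCT => -> ->.
Qed.

Lemma L_I (U : finType) (h : RA -> U -> U -> bool) (Hr : representation h) (X Y : RA) (u v : U) :
  h (X :&: Y) u v = h X u v && h Y u v.
Proof.
case: Hr => _ [hJ [hC _]].
have E : X :&: Y = ra_compl (ra_join (ra_compl X) (ra_compl Y)).
  by rewrite /ra_compl /ra_join setCU !setCK.
by rewrite E hC hJ !hC negb_or !negbK.
Qed.

Lemma L_mono (U : finType) (h : RA -> U -> U -> bool) (Hr : representation h) (X Y : RA) (u v : U) :
  X \subset Y -> h X u v -> h Y u v.
Proof.
case: Hr => _ [hJ _] sub hX.
have E : Y = ra_join X Y by rewrite /ra_join; apply/esym/setUidPr.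
by rewrite E hJ hX.
Qed.

Lemma L_id (U : finType) (h : RA -> U -> U -> bool) (Hr : representation h) (u v : U) :
  h [set Defs.one] u v = (u == v).
Proof. by case: Hr => _ [_ [_ [hI _]]]; exact: hI. Qed.

Lemma L_sym (U : finType) (h : RA -> U -> U -> bool) (Hr : representation h) (X : RA) (u v : U) :
  h X u v = h X v u.
Proof. by case: Hr => _ [_ [_ [_ [hV _]]]]; exact: hV. Qed.

Lemma mem_comp1 x y z : (z \in ra_comp [set x] [set y]) = cyc x y z.
Proof.
rewrite inE; apply/existsP/idP.
  by case=> x0 /andP[/set1P -> /existsP[y0 /andP[/set1P -> ]]].
move=> H; exists x; rewrite set11 /=; apply/existsP; exists y; by rewrite set11.
Qed.

Lemma L_excl (U : finType) (h : RA -> U -> U -> bool) (Hr : representation h) (x y : atom) (u v : U) :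
  x != y -> h [set x] u v -> h [set y] u v -> False.
Proof.
move=> nxy hx hy.
have : h ([set x] :&: [set y]) u v by rewrite (L_I Hr) hx hy.
have -> : [set x] :&: [set y] = set0.
  apply/setP => t; rewrite !inE; case: eqP => // ->; by rewrite (negbTE nxy).
by rewrite (L_0 Hr).
Qed.

Lemma L_forb (U : finType) (h : RA -> U -> U -> bool) (Hr : representation h) (x y z : atom) (u w v : U) :
  h [set x] u w -> h [set y] w v -> h [set z] u v -> cyc x y z.
Proof.
move=> H1 H2 H3.
have H : h (ra_comp [set x] [set y] :&: [set z]) u v.
  rewrite (L_I Hr) H3 andbT; case: Hr => _ [_ [_ [_ [_ hM]]]]; rewrite hM.
  by apply/existsP; exists w; rewrite H1 H2.
apply: contraT => nc.
have E : ra_comp [set x] [set y] :&: [set z] = set0.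
  apply/setP => t; rewrite in_setI mem_comp1 in_set1 in_set0.
  by case: (t =P z) => [->|_]; rewrite ?andbF ?(negbTE nc).
by rewrite E (L_0 Hr) in H.
Qed.

Lemma L_mand (U : finType) (h : RA -> U -> U -> bool) (Hr : representation h) (x y z : atom) (u v : U) :
  cyc x y z -> h [set z] u v -> exists w, h [set x] u w && h [set y] w v.
Proof.
move=> c hz.
have : h (ra_comp [set x] [set y]) u v by apply: (L_mono Hr) hz; rewrite sub1set mem_comp1.
by case: Hr => _ [_ [_ [_ [_ hM]]]]; rewrite hM => /existsP.
Qed.

Lemma L_cover (U : finType) (h : RA -> U -> U -> bool) (Hr : representation h) (u v : U) :
  u != v -> [|| h [set at_a] u v, h [set at_b] u v | h [set at_c] u v].
Proof.
move=> nuv.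
have E : [set: atom] = ra_join [set Defs.one] (ra_join [set at_a] (ra_join [set at_b] [set at_c])).
  apply/setP => t; rewrite /ra_join !inE; case: t; by rewrite ?eqxx ?neq_atoms.
have := L_T Hr u v; rewrite E.
case: Hr => _ [hJ [_ [hI _]]]; rewrite !hJ.
by rewrite hI (negbTE nuv).
Qed.

Definition G (U : finType) (h : RA -> U -> U -> bool) (u v : U) :=
  h [set at_b] u v || h [set at_c] u v.
Definition A (U : finType) (h : RA -> U -> U -> bool) (u v : U) := h [set at_a] u v.

Ltac cycE := rewrite /cyc ?neq_atoms ?eqxx.

Lemma Gsym (U : finType) (h : RA -> U -> U -> bool) (Hr : representation h) (a b : U) :
  G h a b -> G h b a.
Proof. by rewrite /G (L_sym Hr [set at_b]) (L_sym Hr [set at_c]). Qed.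

Lemma Asym (U : finType) (h : RA -> U -> U -> bool) (Hr : representation h) (a b : U) :
  A h a b -> A h b a.
Proof. by rewrite /A (L_sym Hr). Qed.

Lemma tri (U : finType) (h : RA -> U -> U -> bool) (Hr : representation h) (a b c : U) :
  G h a b -> G h b c -> G h a c -> False.
Proof.
by move=> /orP[]H1 /orP[]H2 /orP[]H3; have := L_forb Hr H1 H2 H3; cycE.
Qed.

Lemma AG (U : finType) (h : RA -> U -> U -> bool) (Hr : representation h) (a b : U) :
  A h a b -> G h a b -> False.
Proof.
by move=> H /orP[]H'; apply: (L_excl Hr _ H H'); rewrite neq_atoms.
Qed.

Lemma Airr (U : finType) (h : RA -> U -> U -> bool) (Hr : representation h) (a : U) :
  A h a a -> False.
Proof.
move=> H; apply: (L_excl Hr _ H (_ : h [set Defs.one] a a)); first by rewrite neq_atoms.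
by rewrite (L_id Hr).
Qed.

Lemma path2 (U : finType) (h : RA -> U -> U -> bool) (Hr : representation h) (a b c : U) :
  G h a b -> G h b c -> a != c -> A h a c.
Proof.
move=> H1 H2 nac; have := L_cover Hr nac; case/or3P => // H3; exfalso;
  by apply: (tri Hr H1 H2); rewrite /G H3 ?orbT.
Qed.

Lemma edgeA (U : finType) (h : RA -> U -> U -> bool) (Hr : representation h) (u v : U) :
  G h u v -> exists w, A h u w && A h w v.
Proof.
by case/orP => H; [apply: (L_mand Hr _ H) | apply: (L_mand Hr _ H)]; cycE.
Qed.

Lemma commonBB (U : finType) (h : RA -> U -> U -> bool) (Hr : representation h) (u v : U) :
  A h u v -> exists w, G h u w && G h w v.
Proof.
move=> H; have [|w /andP[H1 H2]] := L_mand Hr (x := at_b) (y := at_b) _ H; first by cycE.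
by exists w; rewrite /G H1 H2.
Qed.

Lemma four (U : finType) (h : RA -> U -> U -> bool) (Hr : representation h) (p q : U) :
  A h p q -> 4 <= #|[set z | G h p z && G h z q]|.
Proof.
move=> H.
have [|w1 /andP[B1 B1']] := L_mand Hr (x := at_b) (y := at_b) _ H; first by cycE.
have [|w2 /andP[C2 C2']] := L_mand Hr (x := at_c) (y := at_c) _ H; first by cycE.
have [|w3 /andP[B3 C3']] := L_mand Hr (x := at_b) (y := at_c) _ H; first by cycE.
have [|w4 /andP[C4 B4']] := L_mand Hr (x := at_c) (y := at_b) _ H; first by cycE.
have nbc : at_b != at_c by rewrite neq_atoms.
have ncb : at_c != at_b by rewrite neq_atoms.
have d12 : w1 != w2 by apply/eqP => e; subst; exact: (L_excl Hr nbc B1 C2).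
have d13 : w1 != w3 by apply/eqP => e; subst; exact: (L_excl Hr nbc B1' C3').
have d14 : w1 != w4 by apply/eqP => e; subst; exact: (L_excl Hr nbc B1 C4).
have d23 : w2 != w3 by apply/eqP => e; subst; exact: (L_excl Hr ncb C2 B3).
have d24 : w2 != w4 by apply/eqP => e; subst; exact: (L_excl Hr ncb C2' B4').
have d34 : w3 != w4 by apply/eqP => e; subst; exact: (L_excl Hr nbc B3 C4).
have sub : w1 |: (w2 |: (w3 |: [set w4])) \subset [set z | G h p z && G h z q].
  apply/subsetP => z; rewrite !inE /G.
  by case/or4P => /eqP ->; rewrite ?B1 ?B1' ?C2 ?C2' ?B3 ?C3' ?C4 ?B4' ?orbT.
apply: leq_trans (subset_leq_card sub).
by rewrite !cardsU1 cards1 !inE !negb_or d12 d13 d14 d23 d24 d34.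
Qed.

Lemma disjU (T : finType) (X Y : {set T}) :
  (forall z, z \in X -> z \in Y -> False) -> #|X :|: Y| = #|X| + #|Y|.
Proof.
move=> D; have := cardsUI X Y.
have -> : X :&: Y = set0 by apply/setP => z; rewrite !inE; apply/negbTE/andP => -[/D].
by rewrite cards0 addn0.
Qed.

Ltac splitH :=
  repeat match goal with
  | H : is_true (_ && _) |- _ => let H1 := fresh "H" in let H2 := fresh "H" in case/andP: H => H1 H2
  | H : is_true (_ || _) |- _ => case/orP: H => H
  end.

Ltac symclose Hr :=
  repeat match goal with
  | H : is_true (G ?h ?a ?b) |- _ =>
      lazymatch goal with
      | _ : is_true (G h b a) |- _ => fail
      | _ => let H' := fresh "G" in have H' := Gsym Hr H
      end
  end.

Ltac solvetri Hr := symclose Hr;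
  match goal with
  | H1 : is_true (G _ ?a ?b), H2 : is_true (G _ ?b ?c), H3 : is_true (G _ ?a ?c) |- _ =>
      exact (tri Hr H1 H2 H3)
  end.

Theorem mainTheorem10 : ~ in_Spec 17.
Proof.
move=> [U [h [cardU Hr]]].
have : 0 < #|U| by rewrite cardU.
case/card_gt0P => u _.
have hid : h [set Defs.one] u u by rewrite (L_id Hr).
have cy : cyc at_b at_b Defs.one by cycE.
have [v /andP[Buv _]] := L_mand Hr cy hid.
have Guv : G h u v by rewrite /G Buv.
have [w /andP[Auw Awv]] := edgeA Hr Guv.
have [x /andP[Gux Gxw]] := commonBB Hr Auw.
have [y /andP[Gwy Gyv]] := commonBB Hr Awv.
have Gvy := Gsym Hr Gyv; have Gyw := Gsym Hr Gwy; have Gwx := Gsym Hr Gxw; have Gxu := Gsym Hr Gux.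
have Auy : A h u y.
  apply: (path2 Hr Guv Gvy); apply/eqP => e; subst y; exact: (AG Hr Auw (Gsym Hr Gwy)).
have Ayx : A h y x.
  apply: (path2 Hr Gyw Gwx); apply/eqP => e; subst y; exact: (tri Hr Guv Gvy Gux).
have Axv : A h x v.
  apply: (path2 Hr Gxu Guv); apply/eqP => e; subst x; exact: (AG Hr Awv Gwx).
have Avw := Asym Hr Awv.
have Awu := Asym Hr Auw.
pose S a b := [set z | G h a z && G h z b].
have c0 := four Hr Auy; have c1 := four Hr Avw; have c2 := four Hr Ayx;
have c3 := four Hr Awu; have c4 := four Hr Axv.
have E1 : #|S u y :|: S v w| = #|S u y| + #|S v w|.
  by apply: disjU => z; rewrite !inE => ? ?; splitH; solvetri Hr.
have E2 : #|S u y :|: S v w :|: S y x| = #|S u y :|: S v w| + #|S y x|.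
  by apply: disjU => z; rewrite !inE => ? ?; splitH; solvetri Hr.
have E3 : #|S u y :|: S v w :|: S y x :|: S w u| = #|S u y :|: S v w :|: S y x| + #|S w u|.
  by apply: disjU => z; rewrite !inE => ? ?; splitH; solvetri Hr.
have E4 : #|S u y :|: S v w :|: S y x :|: S w u :|: S x v| =
          #|S u y :|: S v w :|: S y x :|: S w u| + #|S x v|.
  by apply: disjU => z; rewrite !inE => ? ?; splitH; solvetri Hr.
have := max_card (mem (S u y :|: S v w :|: S y x :|: S w u :|: S x v)).
rewrite cardU E4 E3 E2 E1.
have c0' : 3 < #|S u y| := c0; have c1' : 3 < #|S v w| := c1; have c2' : 3 < #|S y x| := c2;
have c3' : 3 < #|S w u| := c3; have c4' : 3 < #|S x v| := c4.
move=> Hle; move: Hle c0' c1' c2' c3' c4'.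
move: #|S u y| #|S v w| #|S y x| #|S w u| #|S x v| => n0 n1 n2 n3 n4.
clear. lia.
Qed.
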